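(* Let $f:\mathbb{R}^n\to\mathbb{R}$ and $g:\mathbb{R}^n\to(-\infty,\infty]$ satisfy the standing assumptions below, with $3\sigma>2L$, and let $\gamma$ satisfy \[ 0<\gamma<\frac{3\sigma-2L}{L^2}. \] Let $\{(y^t,z^t,x^t)\}$ be any sequence generated by the PR splitting iteration (defined below) from some $x^0\in\mathbb{R}^n$. Then the sequence $\{\mathcal{P}_\gamma(y^t,z^t,x^t)\}_{t\ge 1}$ is nonincreasing. Moreover, if the sequence $\{(y^t,z^t,x^t)\}$ has a cluster point $(y^*,z^*,x^* )$, then \[ \lim_{t\to\infty}\|x^{t+1}-x^t\| = 2\lim_{t\to\infty}\|z^{t+1}-y^{t+1}\| = 0, \] $z^*=y^*$, and $0\in\nabla f(z^* )+\partial g(z^* )$.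
   Context: Standing assumptions: $f:\mathbb{R}^n\to\mathbb{R}$ is differentiable and strongly convex with modulus at least $\sigma>0$ (i.e. $f-\frac{\sigma}{2}\|\cdot\|^2$ is convex), and $\nabla f$ is Lipschitz continuous with modulus at most $L>0$. The function $g:\mathbb{R}^n\to(-\infty,\infty]$ is proper and lower semicontinuous, and for the $\gamma>0$ used, the set $\operatorname{Argmin}_u\{\gamma g(u)+\frac12\|u-w\|^2\}$ is nonempty for every $w\in\mathbb{R}^n$. PR splitting iteration: given $x^0$ and $\gamma>0$, for $t=0,1,2,\dots$: $y^{t+1}=\operatorname{argmin}_y\{f(y)+\frac{1}{2\gamma}\|y-x^t\|^2\}$; $z^{t+1}\in\operatorname{Argmin}_z\{g(z)+\frac{1}{2\gamma}\|2y^{t+1}-x^t-z\|^2\}$ (any choice); $x^{t+1}=x^t+2(z^{t+1}-y^{t+1})$. Merit function: $\mathcal{P}_\gamma(y,z,x):=f(y)+g(z)-\frac{3}{2\gamma}\|y-z\|^2+\frac{1}{\gamma}\langle x-y,z-y\rangle$. $\partial g$ denotes the limiting (Mordukhovich) subdifferential: $v\in\partial g(x)$ iff there exist $x^t\to x$ with $g(x^t)\to g(x)$ and $v^t\to v$ such that $\liminf_{z\to x^t, z\neq x^t}\frac{g(z)-g(x^t)-\langle v^t,z-x^t\rangle}{\|z-x^t\|}\ge 0$ for each $t$. *)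

(* Defs.v *)
From Stdlib Require Fin.
From Stdlib Require Import Reals Lra.
Open Scope R_scope.

Definition vec (n : nat) := Fin.t n -> R.

Fixpoint fsum (n : nat) : (Fin.t n -> R) -> R :=
  match n with
  | O => fun _ => 0
  | S m => fun h => h Fin.F1 + fsum m (fun i => h (Fin.FS i))
  end.

Definition vadd {n} (u v : vec n) : vec n := fun i => u i + v i.
Definition vsub {n} (u v : vec n) : vec n := fun i => u i - v i.
Definition vscal {n} (a : R) (u : vec n) : vec n := fun i => a * u i.
Definition vzero {n} : vec n := fun _ => 0.
Definition inner {n} (u v : vec n) : R := fsum n (fun i => u i * v i).
Definition norm {n} (u : vec n) : R := sqrt (inner u u).

(* Extended reals (-oo, +oo] : [None] stands for +oo. *)
Definition ereal := option R.

Definition rlt_e (a : R) (e : ereal) : Prop :=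
  match e with None => True | Some b => a < b end.
Definition ele (e1 e2 : ereal) : Prop :=
  match e1, e2 with
  | _, None => True
  | None, Some _ => False
  | Some a, Some b => a <= b
  end.

Definition vcv {n} (u : nat -> vec n) (l : vec n) : Prop :=
  Un_cv (fun t => norm (vsub (u t) l)) 0.

Definition has_gradient {n} (f : vec n -> R) (df : vec n -> vec n) : Prop :=
  forall x eps, 0 < eps -> exists delta, 0 < delta /\
    forall h : vec n, 0 < norm h < delta ->
      Rabs (f (vadd x h) - f x - inner (df x) h) <= eps * norm h.

Definition convex_fun {n} (F : vec n -> R) : Prop :=
  forall x y lam, 0 <= lam <= 1 ->
    F (vadd (vscal lam x) (vscal (1 - lam) y)) <= lam * F x + (1 - lam) * F y.

Definition strongly_convex {n} (f : vec n -> R) (sigma : R) : Prop :=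
  convex_fun (fun x => f x - sigma / 2 * (norm x) ^ 2).

Definition lipschitz {n} (G : vec n -> vec n) (L : R) : Prop :=
  forall x y, norm (vsub (G x) (G y)) <= L * norm (vsub x y).

Definition proper {n} (g : vec n -> ereal) : Prop := exists x r, g x = Some r.

Definition lsc {n} (g : vec n -> ereal) : Prop :=
  forall x a, rlt_e a (g x) -> exists delta, 0 < delta /\
    forall y, norm (vsub y x) < delta -> rlt_e a (g y).

Definition is_min {n} (h : vec n -> ereal) (u : vec n) : Prop :=
  exists hu, h u = Some hu /\ forall v, ele (Some hu) (h v).

Definition prox_obj {n} (g : vec n -> ereal) (gamma : R) (w : vec n) : vec n -> ereal :=
  fun u => option_map (fun gu => gamma * gu + / 2 * (norm (vsub u w)) ^ 2) (g u).

Definition frechet_subgrad {n} (g : vec n -> ereal) (x v : vec n) : Prop :=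
  exists gx, g x = Some gx /\
    forall eps, 0 < eps -> exists delta, 0 < delta /\
      forall z, 0 < norm (vsub z x) < delta ->
        match g z with
        | None => True
        | Some gz => - eps * norm (vsub z x) <= gz - gx - inner v (vsub z x)
        end.

Definition limiting_subgrad {n} (g : vec n -> ereal) (x v : vec n) : Prop :=
  exists (xs vs : nat -> vec n) (gxs : nat -> R) (gx : R),
    g x = Some gx /\
    (forall t, g (xs t) = Some (gxs t)) /\
    vcv xs x /\ Un_cv gxs gx /\ vcv vs v /\
    (forall t, frechet_subgrad g (xs t) (vs t)).

Definition merit {n} (f : vec n -> R) (g : vec n -> ereal) (gamma : R)
  (y z x : vec n) : ereal :=
  option_map (fun gz => f y + gz - 3 / (2 * gamma) * (norm (vsub y z)) ^ 2
                        + / gamma * inner (vsub x y) (vsub z y)) (g z).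

Definition pr_iteration {n} (f : vec n -> R) (g : vec n -> ereal) (gamma : R)
  (y z x : nat -> vec n) : Prop :=
  forall t,
    (forall v, f (y (S t)) + / (2 * gamma) * (norm (vsub (y (S t)) (x t))) ^ 2
               <= f v + / (2 * gamma) * (norm (vsub v (x t))) ^ 2) /\
    is_min (fun w => option_map
              (fun gw => gw + / (2 * gamma) *
                 (norm (vsub (vsub (vscal 2 (y (S t))) (x t)) w)) ^ 2) (g w))
           (z (S t)) /\
    x (S t) = vadd (x t) (vscal 2 (vsub (z (S t)) (y (S t)))).

Definition cluster_point3 {n} (y z x : nat -> vec n) (ys zs xs : vec n) : Prop :=
  forall eps N, 0 < eps -> exists t, (N <= t)%nat /\
    norm (vsub (y t) ys) < eps /\ norm (vsub (z t) zs) < eps /\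
    norm (vsub (x t) xs) < eps.

(* Main.v *)
Require Import Defs.
From Stdlib Require Import Reals Lra Lia FunctionalExtensionality ClassicalEpsilon Classical.
From Stdlib Require Fin.
Open Scope R_scope.

Definition nsq {n} (u : vec n) : R := inner u u.

Lemma fsum_ext : forall n (h1 h2 : Fin.t n -> R), (forall i, h1 i = h2 i) -> fsum n h1 = fsum n h2.
Proof. induction n; intros h1 h2 H; simpl; [reflexivity|]. rewrite H. f_equal. apply IHn. intros; apply H. Qed.

Lemma fsum_plus : forall n (h1 h2 : Fin.t n -> R), fsum n h1 + fsum n h2 = fsum n (fun i => h1 i + h2 i).
Proof. induction n; intros h1 h2; simpl; [lra|].
  specialize (IHn (fun i => h1 (Fin.FS i)) (fun i => h2 (Fin.FS i))). cbv beta in IHn. rewrite <- IHn. ring. Qed.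
Lemma fsum_mull : forall n c (h : Fin.t n -> R), c * fsum n h = fsum n (fun i => c * h i).
Proof. induction n; intros c h; simpl; [lra|].
  specialize (IHn c (fun i => h (Fin.FS i))). cbv beta in IHn. rewrite <- IHn. ring. Qed.
Lemma fsum_mulr : forall n c (h : Fin.t n -> R), fsum n h * c = fsum n (fun i => h i * c).
Proof. intros. rewrite Rmult_comm, fsum_mull. apply fsum_ext. intros; ring. Qed.
Lemma fsum_opp : forall n (h : Fin.t n -> R), - fsum n h = fsum n (fun i => - h i).
Proof. intros. replace (- fsum n h) with ((-1) * fsum n h) by ring. rewrite fsum_mull. apply fsum_ext; intros; ring. Qed.
Lemma fsum_minus : forall n (h1 h2 : Fin.t n -> R), fsum n h1 - fsum n h2 = fsum n (fun i => h1 i - h2 i).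
Proof. intros. unfold Rminus. rewrite fsum_opp, fsum_plus. apply fsum_ext; intros; ring. Qed.
Lemma fsum_nonneg : forall n (h : Fin.t n -> R), (forall i, 0 <= h i) -> 0 <= fsum n h.
Proof. induction n; intros h H; simpl; [lra|]. specialize (IHn (fun i => h (Fin.FS i))). 
  specialize (H Fin.F1) as Hf. assert (0 <= fsum n (fun i => h (Fin.FS i))) by (apply IHn; intros; apply H). lra. Qed.
Lemma fsum_zero : forall n (h : Fin.t n -> R), (forall i, 0 <= h i) -> fsum n h = 0 -> forall i, h i = 0.
Proof. induction n; intros h H H0 i. - inversion i.
  - simpl in H0. assert (0 <= fsum n (fun i => h (Fin.FS i))) by (apply fsum_nonneg; intros; apply H).
    specialize (H Fin.F1) as Hf.
    apply (Fin.caseS' i (fun j => h j = 0)).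
    + lra.
    + intro p. apply (IHn (fun i => h (Fin.FS i))); [intros; apply H | lra].
Qed.
Lemma fsum_c0 : forall n, fsum n (fun _ => 0) = 0.
Proof. induction n; simpl; [lra|]. rewrite IHn; ring. Qed.

Ltac lin_unfold := unfold nsq, inner, vadd, vsub, vscal, vzero.
Ltac fsum_collect := repeat first [rewrite fsum_plus | rewrite fsum_minus | rewrite fsum_mull | rewrite fsum_mulr | rewrite fsum_opp].
Ltac lin_eq := lin_unfold; fsum_collect; apply fsum_ext; intro k0; cbv beta.
Lemma le_sub : forall a b, 0 <= b - a -> a <= b. Proof. intros; lra. Qed.
Ltac lin_le := apply le_sub; lin_unfold; fsum_collect; apply fsum_nonneg; intro k0; cbv beta.

Lemma nsq_nonneg {n} (u : vec n) : 0 <= nsq u.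
Proof. unfold nsq, inner. apply fsum_nonneg. intros; nra. Qed.
Lemma norm_sq {n} (u : vec n) : norm u ^ 2 = nsq u.
Proof. unfold norm. apply pow2_sqrt, nsq_nonneg. Qed.
Lemma norm_nonneg {n} (u : vec n) : 0 <= norm u.
Proof. apply sqrt_pos. Qed.
Lemma norm_lt {n} (u : vec n) e : norm u < e -> nsq u < e ^ 2.
Proof. intros. rewrite <- norm_sq. pose proof (norm_nonneg u). nra. Qed.
Lemma lt_norm {n} (u : vec n) e : 0 < e -> nsq u < e ^ 2 -> norm u < e.
Proof. intros. rewrite <- norm_sq in H0. pose proof (norm_nonneg u).
  destruct (Rlt_le_dec (norm u) e); auto. nra. Qed.
Lemma nsq_zero {n} (u : vec n) : nsq u = 0 -> forall i, u i = 0.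
Proof. intros H i. unfold nsq, inner in H. assert (Hp : forall j, 0 <= u j * u j) by (intros; nra). pose proof (fsum_zero n _ Hp H i). cbv beta in H0. nra. Qed.
Lemma nsq_ext {n} (u v : vec n) : (forall i, u i = v i) -> nsq u = nsq v.
Proof. intros. unfold nsq, inner. apply fsum_ext. intros; rewrite H; ring. Qed.
Lemma inner_ext {n} (u v u' v' : vec n) : (forall i, u i = u' i) -> (forall i, v i = v' i) -> inner u v = inner u' v'.
Proof. intros. unfold inner. apply fsum_ext. intros; rewrite H, H0; ring. Qed.

Lemma young {n} (u v : vec n) a : 0 < a -> 2 * inner u v <= a * nsq u + / a * nsq v.
Proof. intros. lin_le. 
  replace (a * (u k0 * u k0) + / a * (v k0 * v k0) - 2 * (u k0 * v k0)) with (/a * ((a * u k0 - v k0) * (a * u k0 - v k0))) by (field; lra).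
  apply Rmult_le_pos; [ left; apply Rinv_0_lt_compat; lra | apply Rle_0_sqr]. Qed.


Lemma inner_lb {n} (u v : vec n) : - (/2 * nsq u + /2 * nsq v) <= inner u v.
Proof. lin_le. pose proof (Rle_0_sqr (u k0 + v k0)). unfold Rsqr in *. lra. Qed.
Lemma nsq_3 {n} (a b a0 b0 : vec n) : nsq (vsub a b) <= 3 * (nsq (vsub a a0) + nsq (vsub a0 b0) + nsq (vsub b0 b)).
Proof. lin_le. pose proof (Rle_0_sqr (a k0 - a0 k0 - (a0 k0 - b0 k0))). pose proof (Rle_0_sqr (a k0 - a0 k0 - (b0 k0 - b k0))).
 pose proof (Rle_0_sqr (a0 k0 - b0 k0 - (b0 k0 - b k0))). unfold Rsqr in *. lra. Qed.
Lemma nsq_2 {n} (a b : vec n) : nsq (vsub a b) <= 2 * (nsq a + nsq b).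
Proof. lin_le. pose proof (Rle_0_sqr (a k0 + b k0)). unfold Rsqr in *. lra. Qed.
Lemma nsq_4 {n} (a b c d : vec n) : nsq (vadd (vadd a b) (vadd c d)) <= 4 * (nsq a + nsq b + nsq c + nsq d).
Proof. lin_le. pose proof (Rle_0_sqr (a k0 - b k0)). pose proof (Rle_0_sqr (a k0 - c k0)). pose proof (Rle_0_sqr (a k0 - d k0)).
 pose proof (Rle_0_sqr (b k0 - c k0)). pose proof (Rle_0_sqr (b k0 - d k0)). pose proof (Rle_0_sqr (c k0 - d k0)). unfold Rsqr in *. lra. Qed.
Lemma nsq_scal {n} (u : vec n) a : nsq (vscal a u) = a ^ 2 * nsq u.
Proof. lin_eq. ring. Qed.
Lemma norm_scal {n} (u : vec n) a : norm (vscal a u) = Rabs a * norm u.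
Proof. unfold norm. fold (nsq (vscal a u)). fold (nsq u). rewrite nsq_scal.
  rewrite sqrt_mult; [| nra | apply nsq_nonneg]. f_equal. rewrite <- sqrt_Rsqr_abs. unfold Rsqr. f_equal; ring. Qed.
Lemma nsq_sym {n} (a b : vec n) : nsq (vsub a b) = nsq (vsub b a).
Proof. lin_eq. ring. Qed.

Lemma Rabs_le_between : forall a b, Rabs a <= b -> -b <= a <= b.
Proof. intros a b H. unfold Rabs in H. destruct (Rcase_abs a); lra. Qed.

Lemma norm_pos {n} (u : vec n) : 0 < nsq u -> 0 < norm u.
Proof. intros. pose proof (norm_sq u). pose proof (norm_nonneg u). destruct H1; auto. rewrite <- H1 in H0. lra. Qed.

Lemma grad_ineq {n} (f : vec n -> R) df sigma : 0 < sigma -> has_gradient f df -> strongly_convex f sigma ->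
  forall u v, f u + inner (df u) (vsub v u) + sigma / 2 * nsq (vsub v u) <= f v.
Proof.
  intros Hs Hg Hc u v.
  set (k := vsub v u). set (N := nsq k).
  destruct (Req_dec N 0) as [HN|HN].
  - assert (Hk : forall i, k i = 0) by (apply nsq_zero; exact HN).
    assert (Hv : v = u). { apply functional_extensionality; intro i. specialize (Hk i). unfold k, vsub in Hk. lra. }
    assert (Hi : inner (df u) k = 0). { unfold inner. rewrite <- (fsum_c0 n). apply fsum_ext. intro i; rewrite Hk; ring. }
    rewrite Hi, HN, Hv. lra.
  - assert (HNp : 0 < N) by (pose proof (nsq_nonneg k); fold N in H; lra).
    apply Rnot_lt_le. intro Hlt.
    set (G := f u + inner (df u) k + sigma/2 * N - f v).
    assert (HG : 0 < G) by (unfold G; lra).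
    set (r := norm k). assert (Hr : r ^ 2 = N) by apply norm_sq.
    assert (Hr0 : 0 < r) by (apply norm_pos; exact HNp).
    destruct (Hg u (G / (2*r))) as [delta [Hd Hdel]]. { apply Rdiv_lt_0_compat; lra. }
    set (lam := Rmin (1/2) (Rmin (delta / (2*r)) (G / (sigma*N + 1)))).
    assert (Hl1 : lam <= 1/2) by apply Rmin_l.
    assert (Hl2 : lam <= delta / (2*r)) by (eapply Rle_trans; [apply Rmin_r | apply Rmin_l]).
    assert (Hl3 : lam <= G / (sigma*N + 1)) by (eapply Rle_trans; [apply Rmin_r | apply Rmin_r]).
    assert (HsN : 0 < sigma * N) by (apply Rmult_lt_0_compat; lra).
    assert (Hl0 : 0 < lam).
    { unfold lam. apply Rmin_pos; [lra | apply Rmin_pos; apply Rdiv_lt_0_compat; lra]. }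
    set (h := vscal lam k).
    assert (Hnh : norm h = lam * r). { unfold h. rewrite norm_scal, Rabs_pos_eq; [reflexivity | lra]. }
    assert (Hlr : lam * r <= delta / 2).
    { apply (Rmult_le_compat_r r) in Hl2; [| lra]. replace (delta / (2*r) * r) with (delta/2) in Hl2 by (field; lra). lra. }
    assert (Hlsig : sigma * N * lam + lam <= G).
    { apply (Rmult_le_compat_r (sigma*N+1)) in Hl3; [| nra]. replace (G / (sigma*N + 1) * (sigma*N+1)) with G in Hl3 by (field; nra). nra. }
    specialize (Hdel h). rewrite Hnh in Hdel. specialize (Hdel ltac:(split; nra)).
    assert (Hih : inner (df u) h = lam * inner (df u) k) by (unfold h; lin_eq; ring).
    rewrite Hih in Hdel.
    replace (G / (2 * r) * (lam * r)) with (G * lam / 2) in Hdel by (field; lra).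
    apply Rabs_le_between in Hdel. destruct Hdel as [Hd1 _].
    unfold strongly_convex, convex_fun in Hc. specialize (Hc v u lam ltac:(lra)). cbv beta in Hc.
    assert (Hveq : vadd (vscal lam v) (vscal (1 - lam) u) = vadd u h).
    { apply functional_extensionality; intro i. unfold h, k, vadd, vscal, vsub. ring. }
    rewrite Hveq in Hc. rewrite !norm_sq in Hc.
    assert (Hn : nsq (vadd u h) = lam * nsq v + (1 - lam) * nsq u - lam * (1 - lam) * N).
    { unfold N, h, k. lin_eq. ring. }
    rewrite Hn in Hc.
    assert (Hmain : lam * G <= G * lam / 2 + sigma / 2 * lam * lam * N).
    { set (X := f (vadd u h)) in *.
      assert (E : G*lam/2 + sigma/2 * lam * lam * N - lam*G = (lam*(f v - sigma/2 * nsq v) + (1-lam)*(f u - sigma/2 * nsq u) - (X - sigma/2*(lam * nsq v + (1 - lam) * nsq u - lam * (1 - lam) * N))) + (X - f u - lam*inner (df u) k + G*lam/2)) by (unfold G; ring).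
      lra. }
    nra.
Qed.

Lemma opt_cond {n} (f : vec n -> R) df (y x : vec n) c : has_gradient f df -> 0 < c ->
  (forall v, f y + c * nsq (vsub y x) <= f v + c * nsq (vsub v x)) ->
  forall i, df y i + 2 * c * (y i - x i) = 0.
Proof.
  intros Hg Hc Hmin.
  set (w := (fun i => df y i + 2 * c * (y i - x i)) : vec n).
  enough (nsq w = 0) by (intros i; apply (nsq_zero w H i)).
  set (N := nsq w). destruct (Req_dec N 0) as [|HN]; auto. exfalso.
  assert (HNp : 0 < N) by (pose proof (nsq_nonneg w); fold N in H; lra).
  set (r := norm w). assert (Hr : r ^ 2 = N) by apply norm_sq.
  assert (Hr0 : 0 < r) by (apply norm_pos; exact HNp).
  destruct (Hg y (r/4)) as [delta [Hd Hdel]]. { lra. }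
  set (s := Rmin (delta/(2*r)) (1/(4*c))).
  assert (Hs1 : s <= delta/(2*r)) by apply Rmin_l.
  assert (Hs2 : s <= 1/(4*c)) by apply Rmin_r.
  assert (Hs0 : 0 < s) by (apply Rmin_pos; apply Rdiv_lt_0_compat; lra).
  set (h := vscal (-s) w).
  assert (Hnh : norm h = s * r). { unfold h. rewrite norm_scal, Rabs_left; [fold r; ring | lra]. }
  assert (Hsr : s * r <= delta / 2).
  { apply (Rmult_le_compat_r r) in Hs1; [| lra]. replace (delta / (2*r) * r) with (delta/2) in Hs1 by (field; lra). lra. }
  assert (Hcs : c * s <= 1/4).
  { apply (Rmult_le_compat_l c) in Hs2; [| lra]. replace (c * (1/(4*c))) with (1/4) in Hs2 by (field; lra). lra. }
  specialize (Hdel h). rewrite Hnh in Hdel. specialize (Hdel ltac:(split; nra)).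
  apply Rabs_le_between in Hdel. destruct Hdel as [_ Hd2].
  specialize (Hmin (vadd y h)).
  assert (Hid : nsq (vsub (vadd y h) x) = nsq (vsub y x) + 2 * inner (vsub y x) h + nsq h) by (lin_eq; ring).
  assert (Hid2 : inner (df y) h + c * (2 * inner (vsub y x) h) = - s * N) by (unfold N, h, w; lin_eq; ring).
  assert (Hid3 : nsq h = s ^ 2 * N) by (unfold h; rewrite nsq_scal; fold N; ring).
  rewrite Hid, Hid3 in Hmin.
  assert (0 <= - s * N + r / 4 * (s * r) + c * (s^2 * N)).
  { set (A := nsq (vsub y x)) in *. set (B := inner (vsub y x) h) in *. set (X := f (vadd y h)) in *.
    assert (E: -s*N + r/4*(s*r) + c*(s^2*N) = (X + c*(A + 2*B + s^2*N) - (f y + c*A)) + (r/4*(s*r) - (X - f y - inner (df y) h)) + (-(s*N) - (inner (df y) h + c*(2*B)))) by ring.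
    rewrite Hid2 in E. lra. }
  replace (r / 4 * (s * r)) with (s * N / 4) in H by (rewrite <- Hr; field).
  assert (c * (s^2*N) <= s * N / 4) by (replace (c * (s^2*N)) with ((c*s) * (s*N)) by ring; assert (0 < s*N) by (apply Rmult_lt_0_compat; lra);
      apply Rle_trans with (1/4 * (s*N)); [apply Rmult_le_compat_r; lra | lra]).
  nra.
Qed.

Lemma cv0_le (u v : nat -> R) : (forall k, 0 <= u k <= v k) -> Un_cv v 0 -> Un_cv u 0.
Proof. intros H Hv eps He. destruct (Hv eps He) as [N HN]. exists N. intros k Hk. specialize (HN k Hk). specialize (H k).
  unfold R_dist in *. rewrite Rminus_0_r in *. rewrite Rabs_pos_eq in *; lra. Qed.

Lemma cv0_scal (u : nat -> R) c : Un_cv u 0 -> Un_cv (fun k => c * u k) 0.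
Proof. intros Hu eps He. assert (Hc : 0 < Rabs c + 1) by (pose proof (Rabs_pos c); lra).
  destruct (Hu (eps / (Rabs c + 1))) as [N HN]. { apply Rdiv_lt_0_compat; lra. }
  exists N. intros k Hk. specialize (HN k Hk). unfold R_dist in *. rewrite Rminus_0_r in *. rewrite Rabs_mult.
  apply Rle_lt_trans with ((Rabs c + 1) * Rabs (u k)). { apply Rmult_le_compat_r; [apply Rabs_pos | lra]. }
  apply (Rmult_lt_compat_l (Rabs c + 1)) in HN; [| lra]. replace ((Rabs c + 1) * (eps / (Rabs c + 1))) with eps in HN by (field; lra). lra. Qed.

Lemma cv0_plus (u v : nat -> R) : Un_cv u 0 -> Un_cv v 0 -> Un_cv (fun k => u k + v k) 0.
Proof. intros. replace 0 with (0 + 0) by ring. apply CV_plus; auto. Qed.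

Lemma cv0_sqrt (u : nat -> R) : (forall k, 0 <= u k) -> Un_cv u 0 -> Un_cv (fun k => sqrt (u k)) 0.
Proof. intros H0 Hu eps He. destruct (Hu (eps^2)) as [N HN]. { nra. }
  exists N. intros k Hk. specialize (HN k Hk). specialize (H0 k). unfold R_dist in *. rewrite Rminus_0_r in *.
  rewrite Rabs_pos_eq in *; try lra; [| apply sqrt_pos].
  pose proof (pow2_sqrt (u k) H0). pose proof (sqrt_pos (u k)).
  destruct (Rlt_le_dec (sqrt (u k)) eps); auto. nra. Qed.

Lemma cv0_sub (u : nat -> R) (phi : nat -> nat) : (forall k, (k <= phi k)%nat) -> Un_cv u 0 -> Un_cv (fun k => u (phi k)) 0.
Proof. intros Hp Hu eps He. destruct (Hu eps He) as [N HN]. exists N. intros k Hk. apply HN. specialize (Hp k). lia. Qed.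

Lemma cv_diff (a : nat -> R) l : Un_cv a l -> Un_cv (fun k => a k - a (S k)) 0.
Proof. intros Ha eps He. destruct (Ha (eps/2)) as [N HN]. { lra. }
  exists N. intros k Hk. pose proof (HN k Hk). pose proof (HN (S k) ltac:(lia)). unfold R_dist in *.
  rewrite Rminus_0_r. unfold Rabs in *. destruct (Rcase_abs (a k - l)), (Rcase_abs (a (S k) - l)), (Rcase_abs (a k - a (S k))); lra. Qed.

Definition ek (k : nat) := / (INR k + 1).
Lemma ek_pos k : 0 < ek k.
Proof. unfold ek. apply Rinv_0_lt_compat. pose proof (pos_INR k). lra. Qed.
Lemma ek_le1 k : ek k <= 1.
Proof. unfold ek. pose proof (pos_INR k). rewrite <- Rinv_1. apply Rinv_le_contravar; lra. Qed.
Lemma ek_cv : Un_cv ek 0.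
Proof. intros eps He. destruct (archimed_cor1 eps He) as [N [HN HN0]]. exists N. intros k Hk.
  unfold R_dist. rewrite Rminus_0_r, Rabs_pos_eq by (left; apply ek_pos). unfold ek.
  apply Rle_lt_trans with (/ INR N); auto. apply Rinv_le_contravar. apply lt_0_INR; lia.
  apply le_INR in Hk. lra. Qed.
Lemma ek_sq k : ek k ^ 2 <= ek k.
Proof. pose proof (ek_pos k). pose proof (ek_le1 k). nra. Qed.

Lemma nsq3' {n} (a b c : vec n) : nsq (vadd (vadd a b) c) <= 3 * (nsq a + nsq b + nsq c).
Proof. lin_le. pose proof (Rle_0_sqr (a k0 - b k0)). pose proof (Rle_0_sqr (a k0 - c k0)).
 pose proof (Rle_0_sqr (b k0 - c k0)). unfold Rsqr in *. lra. Qed.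

Lemma young_neg {n} (u v : vec n) a : 0 < a -> - (2 * inner u v) <= a * nsq u + / a * nsq v.
Proof. intros. lin_le. 
  replace (a * (u k0 * u k0) + / a * (v k0 * v k0) - - (2 * (u k0 * v k0))) with (/a * ((a * u k0 + v k0) * (a * u k0 + v k0))) by (field; lra).
  apply Rmult_le_pos; [ left; apply Rinv_0_lt_compat; lra | apply Rle_0_sqr]. Qed.

Lemma nsq_eq0_of_small {n} (u : vec n) : (forall eps, 0 < eps -> nsq u < eps) -> forall i, u i = 0.
Proof. intros H. apply nsq_zero. pose proof (nsq_nonneg u). destruct H0; auto.
  specialize (H _ H0). lra. Qed.

Lemma lip_sq {n} (G : vec n -> vec n) L a b : lipschitz G L -> 0 < L -> nsq (vsub (G a) (G b)) <= L^2 * nsq (vsub a b).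
Proof. intros H HL. specialize (H a b). rewrite <- !norm_sq. pose proof (norm_nonneg (vsub (G a) (G b))).
  pose proof (norm_nonneg (vsub a b)). replace (L^2 * norm (vsub a b) ^2) with ((L * norm (vsub a b))^2) by ring.
  apply pow_incr. lra. Qed.

Section Main.
Variables (n : nat) (f : vec n -> R) (df : vec n -> vec n) (g : vec n -> ereal) (sigma L gamma : R).
Hypotheses (Hsigma : 0 < sigma) (HL : 0 < L) (Hdf : has_gradient f df) (Hsc : strongly_convex f sigma)
  (Hlip : lipschitz df L) (Hg0 : 0 < gamma) (Hgam : gamma * L^2 < 3 * sigma - 2 * L).
Variables (y z x : nat -> vec n).
Hypothesis (Hiter : pr_iteration f g gamma y z x).

Lemma step_x t : forall i, x t i = y (S t) i + gamma * df (y (S t)) i.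
Proof. intro i. destruct (Hiter t) as [Hy _].
  assert (Hc : 0 < / (2 * gamma)) by (apply Rinv_0_lt_compat; lra).
  assert (H := opt_cond f df (y (S t)) (x t) (/ (2*gamma)) Hdf Hc).
  assert (Hm : forall v, f (y (S t)) + / (2 * gamma) * nsq (vsub (y (S t)) (x t)) <= f v + / (2 * gamma) * nsq (vsub v (x t))).
  { intro v. rewrite <- !norm_sq. apply Hy. }
  specialize (H Hm i).
  replace (x t i) with (x t i + gamma * (df (y (S t)) i + 2 * / (2 * gamma) * (y (S t) i - x t i))) by (rewrite H; ring).
  field. lra. Qed.

Definition gval t := match g (z t) with Some r => r | None => 0 end.

Lemma step_g t : g (z (S t)) = Some (gval (S t)).
Proof. destruct (Hiter t) as [_ [[hu [Hh _]] _]]. unfold gval. destruct (g (z (S t))); [reflexivity | discriminate]. Qed.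

Lemma step_min t : forall w gw, g w = Some gw ->
  gval (S t) + / (2 * gamma) * nsq (vsub (vsub (vscal 2 (y (S t))) (x t)) (z (S t))) <=
  gw + / (2 * gamma) * nsq (vsub (vsub (vscal 2 (y (S t))) (x t)) w).
Proof. intros w gw Hw. destruct (Hiter t) as [_ [[hu [Hh Hall]] _]]. specialize (Hall w).
  rewrite step_g in Hh. simpl in Hh. injection Hh as Hh. rewrite Hw in Hall. simpl in Hall.
  rewrite <- !norm_sq. lra. Qed.

Definition mval t := f (y t) + gval t - 3 / (2 * gamma) * nsq (vsub (y t) (z t))
   + / gamma * inner (vsub (x t) (y t)) (vsub (z t) (y t)).

Lemma merit_eq t : merit f g gamma (y (S t)) (z (S t)) (x (S t)) = Some (mval (S t)).
Proof. unfold merit. rewrite step_g. cbn [option_map]. unfold mval. rewrite !norm_sq. reflexivity. Qed.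

Lemma phi_eq t : mval (S t) = f (y (S t)) + gval (S t) + inner (df (y (S t))) (vsub (z (S t)) (y (S t)))
   + / (2 * gamma) * nsq (vsub (z (S t)) (y (S t))).
Proof. unfold mval. destruct (Hiter t) as [_ [_ Hx]]. rewrite Hx.
  assert (E : / gamma * inner (vsub (vadd (x t) (vscal 2 (vsub (z (S t)) (y (S t))))) (y (S t))) (vsub (z (S t)) (y (S t)))
     = inner (df (y (S t))) (vsub (z (S t)) (y (S t))) + / (2 * gamma) * nsq (vsub (z (S t)) (y (S t)))
       + 3 / (2 * gamma) * nsq (vsub (y (S t)) (z (S t)))).
  { lin_eq. rewrite step_x. field. lra. }
  rewrite E. ring. Qed.

Definition kappa := 3 * sigma - 2 * L - gamma * L^2.

Lemma descent t : mval (S (S t)) <= mval (S t) - kappa / 2 * nsq (vsub (y (S (S t))) (y (S t))).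
Proof.
  rewrite !phi_eq.
  set (Y := y (S t)). set (Z := z (S t)). set (Y' := y (S (S t))). set (Z' := z (S (S t))).
  set (D := df Y). set (D' := df Y'). set (c := / (2 * gamma)).
  assert (Hc : 0 < c) by (apply Rinv_0_lt_compat; lra).
  assert (Ha1 : forall i, x (S t) i = Y' i + gamma * D' i) by apply step_x.
  assert (Ha0 : forall i, x t i = Y i + gamma * D i) by apply step_x.
  destruct (Hiter t) as [_ [_ Hx0]].
  assert (HZ : forall i, Z i = (Y' i + gamma * D' i - gamma * D i + Y i) / 2).
  { intro i. pose proof (Ha1 i) as H1. rewrite Hx0 in H1. unfold vadd, vscal, vsub in H1. rewrite Ha0 in H1.
    fold Z Y in H1. lra. }
  pose proof (step_min (S t) Z (gval (S t)) (step_g t)) as Hm. fold Y' Z' c in Hm.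
  assert (I1 : forall W, c * nsq (vsub (vsub (vscal 2 Y') (x (S t))) W) = inner D' (vsub W Y') + c * nsq (vsub W Y') + gamma / 2 * nsq D').
  { intro W. unfold c. lin_eq. rewrite Ha1. field. lra. }
  rewrite !I1 in Hm.
  assert (I2 : inner D' (vsub Z Y') + c * nsq (vsub Z Y') = inner D (vsub Z Y) + c * nsq (vsub Z Y) - inner D' (vsub Y' Y) + gamma / 2 * nsq (vsub D' D)).
  { unfold c. lin_eq. rewrite HZ. field. lra. }
  pose proof (grad_ineq f df sigma Hsigma Hdf Hsc Y' Y) as F5. fold D' in F5.
  pose proof (grad_ineq f df sigma Hsigma Hdf Hsc Y Y') as F6. fold D in F6.
  assert (L1 : inner D' (vsub Y Y') = - inner D' (vsub Y' Y)) by (lin_eq; ring).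
  rewrite L1, nsq_sym in F5.
  pose proof (lip_sq df L Y' Y Hlip HL) as Hl. fold D D' in Hl.
  pose proof (young (vsub Y' Y) (vsub D' D) L HL) as Hy.
  assert (L2 : inner (vsub Y' Y) (vsub D' D) = inner D' (vsub Y' Y) - inner D (vsub Y' Y)) by (lin_eq; ring).
  rewrite L2 in Hy.
  set (N := nsq (vsub Y' Y)) in *. set (E := nsq (vsub D' D)) in *.
  assert (HE1 : / L * E <= L * N).
  { apply Rle_trans with (/ L * (L^2 * N)). apply Rmult_le_compat_l; [left; apply Rinv_0_lt_compat; lra | exact Hl].
    right; field; lra. }
  assert (HE2 : gamma * E <= gamma * (L^2 * N)) by (apply Rmult_le_compat_l; lra).
  assert (HN : 0 <= N) by apply nsq_nonneg.
  unfold kappa. lra.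
Qed.


Lemma zy_bound t : nsq (vsub (z (S t)) (y (S t))) <= (1 + gamma^2 * L^2) / 2 * nsq (vsub (y (S (S t))) (y (S t))).
Proof.
  set (Y := y (S t)). set (Z := z (S t)). set (Y' := y (S (S t))).
  set (D := df Y). set (D' := df Y').
  assert (Ha1 : forall i, x (S t) i = Y' i + gamma * D' i) by apply step_x.
  assert (Ha0 : forall i, x t i = Y i + gamma * D i) by apply step_x.
  destruct (Hiter t) as [_ [_ Hx0]].
  assert (HZ : forall i, Z i = (Y' i + gamma * D' i - gamma * D i + Y i) / 2).
  { intro i. pose proof (Ha1 i) as H1. rewrite Hx0 in H1. unfold vadd, vscal, vsub in H1. rewrite Ha0 in H1.
    fold Z Y in H1. lra. }
  assert (H1 : nsq (vsub Z Y) <= / 2 * nsq (vsub Y' Y) + gamma^2 / 2 * nsq (vsub D' D)).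
  { lin_le. rewrite HZ. pose proof (Rle_0_sqr ((Y' k0 - Y k0) - gamma * (D' k0 - D k0))). unfold Rsqr in *. nra. }
  pose proof (lip_sq df L Y' Y Hlip HL) as Hl. fold D D' in Hl.
  assert (gamma^2 / 2 * nsq (vsub D' D) <= gamma^2 / 2 * (L^2 * nsq (vsub Y' Y))).
  { apply Rmult_le_compat_l; [nra | exact Hl]. }
  lra.
Qed.

Lemma kappa_pos : 0 < kappa.
Proof. unfold kappa. lra. Qed.

Lemma mono t k : mval (S (k + t)) <= mval (S t).
Proof. induction k; simpl; [lra|]. pose proof (descent (k + t)). pose proof kappa_pos.
  pose proof (nsq_nonneg (vsub (y (S (S (k + t)))) (y (S (k + t))))).
  assert (0 <= kappa / 2 * nsq (vsub (y (S (S (k + t)))) (y (S (k + t))))) by (apply Rmult_le_pos; lra). lra. Qed.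

Lemma f_lb u : exists d K, 0 < d /\ forall v, norm (vsub v u) < d -> K <= f v.
Proof.
  destruct (Hdf u 1 Rlt_0_1) as [d [Hd Hh]].
  exists (Rmin d 1), (f u - (/2 * nsq (df u) + /2) - 1). split; [apply Rmin_pos; lra |].
  intros v Hv. set (h := vsub v u).
  assert (Hvu : v = vadd u h) by (apply functional_extensionality; intro i; unfold h, vadd, vsub; ring).
  assert (Hn1 : norm h < 1) by (eapply Rlt_le_trans; [exact Hv | apply Rmin_r]).
  assert (Hnd : norm h < d) by (eapply Rlt_le_trans; [exact Hv | apply Rmin_l]).
  assert (Hs : nsq h < 1) by (pose proof (norm_lt h 1 Hn1); lra).
  pose proof (inner_lb (df u) h). pose proof (nsq_nonneg (df u)). pose proof (norm_nonneg h).
  destruct (Req_dec (norm h) 0) as [Hz0|Hz0].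
  - assert (Hq : nsq h = 0) by (rewrite <- norm_sq, Hz0; ring).
    assert (Hv2 : v = u). { apply functional_extensionality; intro i. pose proof (nsq_zero h Hq i) as Hq2. unfold h, vsub in Hq2. lra. }
    rewrite Hv2. lra.
  - specialize (Hh h ltac:(lra)). rewrite <- Hvu in Hh. apply Rabs_le_between in Hh. lra.
Qed.

Lemma lower_bound ys zs xs : lsc g -> cluster_point3 y z x ys zs xs -> exists B, forall t, B <= mval (S t).
Proof.
  intros Hlsc Hcl.
  destruct (f_lb ys) as [d1 [K1 [Hd1 Hf1]]].
  set (a0 := match g zs with Some r => r - 1 | None => 0 end).
  assert (Ha0 : rlt_e a0 (g zs)) by (unfold a0; destruct (g zs); simpl; [lra | auto]).
  destruct (Hlsc zs a0 Ha0) as [d2 [Hd2 Hg2]].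
  set (rho := Rmin 1 (Rmin d1 d2)).
  assert (Hrho : 0 < rho) by (apply Rmin_pos; [lra | apply Rmin_pos; lra]).
  assert (Hr1 : rho <= 1) by apply Rmin_l.
  assert (Hr2 : rho <= d1) by (eapply Rle_trans; [apply Rmin_r | apply Rmin_l]).
  assert (Hr3 : rho <= d2) by (eapply Rle_trans; [apply Rmin_r | apply Rmin_r]).
  set (M1 := 3 * (1 + nsq (vsub ys zs) + 1)). set (M2 := 3 * (1 + nsq (vsub xs ys) + 1)).
  exists (K1 + a0 - 3/(2*gamma) * M1 - /gamma * (/2 * M2 + /2 * M1)).
  intro t. destruct (Hcl rho (S t) Hrho) as [t' [Ht' [Hy' [Hz' Hx']]]].
  destruct t' as [|m]; [lia|].
  apply Rle_trans with (mval (S m)); [| replace m with ((m - t) + t)%nat by lia; apply mono].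
  set (Y := y (S m)) in *. set (Z := z (S m)) in *. set (X := x (S m)) in *.
  assert (HfY : K1 <= f Y) by (apply Hf1; lra).
  assert (HgZ : a0 < gval (S m)).
  { pose proof (Hg2 Z ltac:(lra)) as Hr. unfold Z in Hr. rewrite step_g in Hr. exact Hr. }
  assert (N1 : nsq (vsub Y ys) < 1) by (assert (norm (vsub Y ys) < 1) by lra; pose proof (norm_lt _ 1 ltac:(eassumption)); lra).
  assert (N2 : nsq (vsub Z zs) < 1) by (assert (norm (vsub Z zs) < 1) by lra; pose proof (norm_lt _ 1 ltac:(eassumption)); lra).
  assert (N3 : nsq (vsub X xs) < 1) by (assert (norm (vsub X xs) < 1) by lra; pose proof (norm_lt _ 1 ltac:(eassumption)); lra).
  pose proof (nsq_3 Y Z ys zs) as T1. rewrite (nsq_sym zs Z) in T1.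
  pose proof (nsq_3 X Y xs ys) as T2. rewrite (nsq_sym ys Y) in T2.
  assert (B1 : nsq (vsub Y Z) <= M1) by (unfold M1; lra).
  assert (B2 : nsq (vsub X Y) <= M2) by (unfold M2; lra).
  assert (B3 : nsq (vsub Z Y) <= M1) by (rewrite nsq_sym; exact B1).
  pose proof (inner_lb (vsub X Y) (vsub Z Y)) as Hi.
  assert (C1 : 3/(2*gamma) * nsq (vsub Y Z) <= 3/(2*gamma) * M1).
  { apply Rmult_le_compat_l; [ left; apply Rdiv_lt_0_compat; lra | exact B1]. }
  assert (C2 : /gamma * (- (/2 * M2 + /2 * M1)) <= /gamma * inner (vsub X Y) (vsub Z Y)).
  { apply Rmult_le_compat_l; [ left; apply Rinv_0_lt_compat; lra | lra]. }
  unfold mval. fold Y Z X. lra.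
Qed.

Lemma s_cv ys zs xs : lsc g -> cluster_point3 y z x ys zs xs -> Un_cv (fun t => nsq (vsub (z (S t)) (y (S t)))) 0.
Proof.
  intros Hlsc Hcl. destruct (lower_bound ys zs xs Hlsc Hcl) as [B HB].
  set (a := fun k => mval (S k)).
  pose proof kappa_pos as Hk.
  assert (HD : forall k, nsq (vsub (y (S (S k))) (y (S k))) <= 2 / kappa * (a k - a (S k))).
  { intro k. pose proof (descent k). unfold a.
    apply Rmult_le_reg_l with (kappa / 2); [lra |]. replace (kappa / 2 * (2 / kappa * (mval (S k) - mval (S (S k))))) with (mval (S k) - mval (S (S k))) by (field; lra). lra. }
  assert (Hdec : Un_decreasing a).
  { intro k. pose proof (HD k). pose proof (nsq_nonneg (vsub (y (S (S k))) (y (S k)))).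
    assert (0 <= 2 / kappa * (a k - a (S k))) by lra.
    assert (0 <= a k - a (S k)). { apply Rmult_le_reg_l with (2 / kappa); [apply Rdiv_lt_0_compat; lra | lra]. } lra. }
  assert (Hlb : has_lb a).
  { unfold has_lb, bound, is_upper_bound, EUn, opp_seq. exists (-B). intros r [i ->]. specialize (HB i). unfold a. lra. }
  destruct (decreasing_cv a Hdec Hlb) as [l Hl].
  pose proof (cv_diff a l Hl) as Hd.
  apply cv0_le with (fun k => (1 + gamma^2 * L^2) / 2 * (2 / kappa * (a k - a (S k)))).
  - intro k. split; [apply nsq_nonneg|]. eapply Rle_trans; [apply zy_bound|]. apply Rmult_le_compat_l; [|apply HD].
    apply Rmult_le_pos; [nra | lra].
  - apply cv0_scal, cv0_scal, Hd.
Qed.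


Lemma subgrad_part ys xs : lsc g -> proper g -> cluster_point3 y z x ys ys xs ->
  Un_cv (fun t => nsq (vsub (z (S t)) (y (S t)))) 0 ->
  exists v, limiting_subgrad g ys v /\ vadd (df ys) v = vzero.
Proof.
  intros Hlsc Hprop Hcl Hs.
  assert (Hex : forall k, exists m, (k <= m)%nat /\ norm (vsub (y (S m)) ys) < ek k /\ norm (vsub (z (S m)) ys) < ek k).
  { intro k. destruct (Hcl (ek k) (S k) (ek_pos k)) as [t' [Ht [H1 [H2 _]]]]. destruct t' as [|m]; [lia|].
    exists m. split; [lia | auto]. }
  set (mu := fun k => proj1_sig (constructive_indefinite_description _ (Hex k))).
  assert (Hmu : forall k, (k <= mu k)%nat /\ norm (vsub (y (S (mu k))) ys) < ek k /\ norm (vsub (z (S (mu k))) ys) < ek k).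
  { intro k. exact (proj2_sig (constructive_indefinite_description _ (Hex k))). }
  set (Yb := fun k => y (S (mu k))). set (Zb := fun k => z (S (mu k))). set (Xp := fun k => x (mu k)).
  set (c := / (2 * gamma)). assert (Hc : 0 < c) by (apply Rinv_0_lt_compat; lra).
  set (vs := fun k => (fun i => / gamma * (2 * Yb k i - Xp k i - Zb k i)) : vec n).
  set (v := (fun i => - df ys i) : vec n).
  assert (HY : forall k, nsq (vsub (Yb k) ys) < ek k).
  { intro k. destruct (Hmu k) as [_ [H1 _]]. pose proof (norm_lt _ _ H1). pose proof (ek_sq k). unfold Yb; lra. }
  assert (HZ : forall k, nsq (vsub (Zb k) ys) < ek k).
  { intro k. destruct (Hmu k) as [_ [_ H1]]. pose proof (norm_lt _ _ H1). pose proof (ek_sq k). unfold Zb; lra. }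
  assert (HY1 : forall k, nsq (vsub (Yb k) ys) < 1) by (intro k; pose proof (HY k); pose proof (ek_le1 k); lra).
  assert (HZ1 : forall k, nsq (vsub (Zb k) ys) < 1) by (intro k; pose proof (HZ k); pose proof (ek_le1 k); lra).
  assert (Hxp : forall k i, Xp k i = Yb k i + gamma * df (Yb k) i) by (intros; apply step_x).
  assert (Hmin : forall k w gw, g w = Some gw -> gval (S (mu k)) + c * nsq (vsub (vsub (vscal 2 (Yb k)) (Xp k)) (Zb k)) <=
                 gw + c * nsq (vsub (vsub (vscal 2 (Yb k)) (Xp k)) w)) by (intros; apply step_min; auto).
  assert (HgZ : forall k, g (Zb k) = Some (gval (S (mu k)))) by (intros; apply step_g).
  assert (HDL : forall k, nsq (vsub (df (Yb k)) (df ys)) <= L^2) .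
  { intro k. eapply Rle_trans; [apply lip_sq; eauto|]. pose proof (HY1 k). pose proof (nsq_nonneg (vsub (Yb k) ys)). nra. }
  destruct Hprop as [p0 [r0 Hp0]].
  set (w0 := vsub (vsub ys (vscal gamma (df ys))) p0).
  set (M := r0 + c * (3 * (1 + gamma^2 * L^2 + nsq w0))).
  assert (HM : forall k, gval (S (mu k)) <= M).
  { intro k. pose proof (Hmin k p0 r0 Hp0) as Hm.
    assert (E : nsq (vsub (vsub (vscal 2 (Yb k)) (Xp k)) p0) = nsq (vadd (vadd (vsub (Yb k) ys) (vscal (-gamma) (vsub (df (Yb k)) (df ys)))) w0)).
    { apply nsq_ext. intro i. unfold w0, vadd, vsub, vscal. rewrite Hxp. ring. }
    rewrite E in Hm. pose proof (nsq3' (vsub (Yb k) ys) (vscal (-gamma) (vsub (df (Yb k)) (df ys))) w0) as T.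
    rewrite nsq_scal in T.
    pose proof (HDL k). pose proof (HY1 k).
    assert (T2 : nsq (vadd (vadd (vsub (Yb k) ys) (vscal (- gamma) (vsub (df (Yb k)) (df ys)))) w0) <= 3 * (1 + gamma^2 * L^2 + nsq w0)).
    { assert ((-gamma)^2 * nsq (vsub (df (Yb k)) (df ys)) <= gamma^2 * L^2) by (replace ((-gamma)^2) with (gamma^2) by ring; apply Rmult_le_compat_l; [nra | lra]).
      lra. }
    pose proof (nsq_nonneg (vsub (vsub (vscal 2 (Yb k)) (Xp k)) (Zb k))).
    assert (c * nsq (vadd (vadd (vsub (Yb k) ys) (vscal (- gamma) (vsub (df (Yb k)) (df ys)))) w0) <= c * (3 * (1 + gamma^2 * L^2 + nsq w0))) by (apply Rmult_le_compat_l; lra).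
    assert (0 <= c * nsq (vsub (vsub (vscal 2 (Yb k)) (Xp k)) (Zb k))) by (apply Rmult_le_pos; lra).
    unfold M. lra. }
  destruct (g ys) as [gx|] eqn:Hgys.
  2:{ exfalso. destruct (Hlsc ys M) as [d [Hd Hg]]. { rewrite Hgys. exact I. }
      destruct (ek_cv d Hd) as [N HN]. specialize (HN N (le_n N)). unfold R_dist in HN. rewrite Rminus_0_r, Rabs_pos_eq in HN by (left; apply ek_pos).
      destruct (Hmu N) as [_ [_ H1]]. specialize (Hg (Zb N) ltac:(unfold Zb; lra)). rewrite HgZ in Hg. simpl in Hg. specialize (HM N). lra. }
  exists v. split.
  2:{ apply functional_extensionality. intro i. unfold vadd, v, vzero. ring. }
  exists Zb, vs, (fun k => gval (S (mu k))), gx.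
  split; [exact Hgys|]. split; [exact HgZ|]. split.
  { unfold vcv. apply cv0_le with ek; [| exact ek_cv]. intro k. split; [apply norm_nonneg|]. destruct (Hmu k) as [_ [_ H1]]. unfold Zb; lra. }
  split.
  { intros eps He.
    destruct (Hlsc ys (gx - eps)) as [d [Hd Hg]]. { rewrite Hgys. simpl. lra. }
    destruct (ek_cv d Hd) as [N1 HN1].
    set (K := 4 * (1 + 1 + gamma^2 * L^2 + gamma^2 * nsq (df ys))).
    assert (HK : 0 < K) by (unfold K; pose proof (nsq_nonneg (df ys)); assert (0 <= gamma^2 * L^2) by nra; assert (0 <= gamma^2 * nsq (df ys)) by nra; lra).
    assert (HcK : 0 < c * K) by (apply Rmult_lt_0_compat; lra).
    set (eta := eps / (4 * c * K + 1)).
    assert (Heta : 0 < eta) by (unfold eta; apply Rdiv_lt_0_compat; lra).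
    set (Q := c * (1 + / eta)).
    assert (HQ : 0 < Q) by (unfold Q; pose proof (Rinv_0_lt_compat eta Heta); apply Rmult_lt_0_compat; lra).
    set (thr := eps / (2 * Q + 1)).
    assert (Hthr : 0 < thr) by (unfold thr; apply Rdiv_lt_0_compat; lra).
    destruct (ek_cv thr Hthr) as [N2 HN2].
    exists (max N1 N2). intros k Hk.
    specialize (HN1 k ltac:(lia)). specialize (HN2 k ltac:(lia)).
    unfold R_dist in HN1, HN2. rewrite Rminus_0_r, Rabs_pos_eq in HN1, HN2 by (left; apply ek_pos).
    assert (Hlow : gx - eps < gval (S (mu k))).
    { destruct (Hmu k) as [_ [_ H1]]. specialize (Hg (Zb k) ltac:(unfold Zb; lra)). rewrite HgZ in Hg. exact Hg. }
    pose proof (Hmin k ys gx Hgys) as Hm.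
    set (a := vsub (vscal 2 (Yb k)) (Xp k)) in *.
    set (A := vsub a (Zb k)) in *. set (Bv := vsub ys (Zb k)).
    assert (E1 : nsq (vsub a ys) = nsq A - 2 * inner A Bv + nsq Bv).
    { unfold A, Bv. lin_eq. ring. }
    pose proof (young_neg A Bv eta Heta) as Hy.
    assert (HA : nsq A <= K).
    { assert (E : nsq A = nsq (vadd (vadd (vsub (Yb k) ys) (vsub ys (Zb k))) (vadd (vscal (-gamma) (vsub (df (Yb k)) (df ys))) (vscal (-gamma) (df ys))))).
      { apply nsq_ext. intro i. unfold A, a, vadd, vsub, vscal. rewrite Hxp. ring. }
      rewrite E. eapply Rle_trans; [apply nsq_4|]. rewrite !nsq_scal. rewrite (nsq_sym ys).
      pose proof (HY1 k). pose proof (HZ1 k). pose proof (HDL k).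
      replace ((-gamma)^2) with (gamma^2) by ring.
      assert (gamma^2 * nsq (vsub (df (Yb k)) (df ys)) <= gamma^2 * L^2) by (apply Rmult_le_compat_l; [nra|lra]).
      unfold K. lra. }
    assert (HB : nsq Bv < thr). { unfold Bv. rewrite nsq_sym. pose proof (HZ k). lra. }
    pose proof (nsq_nonneg Bv). pose proof (nsq_nonneg A).
    assert (F1 : c * (-2 * inner A Bv + nsq Bv) <= c * (eta * nsq A + /eta * nsq Bv + nsq Bv)) by (apply Rmult_le_compat_l; lra).
    assert (F2 : c * (eta * nsq A) <= c * (eta * K)) by (apply Rmult_le_compat_l; [lra | apply Rmult_le_compat_l; lra]).
    assert (F3 : c * (eta * K) <= eps / 4).
    { assert (Ee : c * (eta * K) * (4 * c * K + 1) = eps * (c * K)) by (unfold eta; field; lra).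
      assert (0 <= c * (eta * K)) by (apply Rmult_le_pos; [lra| apply Rmult_le_pos; lra]).
      nra. }
    assert (F4 : Q * nsq Bv <= Q * thr) by (apply Rmult_le_compat_l; lra).
    assert (F5 : Q * thr < eps / 2).
    { assert (Ee : Q * thr * (2 * Q + 1) = eps * Q) by (unfold thr; field; lra). nra. }
    assert (F6 : c * (eta * nsq A + /eta * nsq Bv + nsq Bv) = c * (eta * nsq A) + Q * nsq Bv) by (unfold Q; ring).
    rewrite E1 in Hm.
    unfold R_dist. apply Rabs_def1; lra. }
  split.
  { unfold vcv.
    set (wseq := fun k => 2 * ((/gamma)^2 * nsq (vsub (z (S (mu k))) (y (S (mu k))))) + 2 * (L^2 * ek k)).
    apply cv0_le with (fun k => sqrt (wseq k)).
    - intro k. split; [apply norm_nonneg|]. unfold norm. apply sqrt_le_1_alt.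
      fold (nsq (vsub (vs k) v)).
      assert (E : nsq (vsub (vs k) v) = nsq (vsub (vscal (/gamma) (vsub (Yb k) (Zb k))) (vsub (df (Yb k)) (df ys)))).
      { apply nsq_ext. intro i. unfold vs, v, vsub, vscal. rewrite Hxp. field. lra. }
      rewrite E. eapply Rle_trans; [apply nsq_2|]. rewrite nsq_scal. rewrite (nsq_sym (Yb k)).
      assert (H1 : nsq (vsub (df (Yb k)) (df ys)) <= L^2 * ek k).
      { eapply Rle_trans; [apply lip_sq; eauto|]. apply Rmult_le_compat_l; [nra | left; apply HY]. }
      unfold wseq, Zb, Yb in *. lra.
    - apply cv0_sqrt.
      + intro k. unfold wseq. pose proof (nsq_nonneg (vsub (z (S (mu k))) (y (S (mu k))))). pose proof (ek_pos k).
        assert (0 <= (/gamma)^2) by nra. assert (0 <= L^2) by nra.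
        assert (0 <= (/gamma)^2 * nsq (vsub (z (S (mu k))) (y (S (mu k))))) by (apply Rmult_le_pos; lra).
        assert (0 <= L^2 * ek k) by (apply Rmult_le_pos; lra). lra.
      + unfold wseq. apply cv0_plus; apply cv0_scal; apply cv0_scal; [| exact ek_cv].
        exact (cv0_sub (fun t => nsq (vsub (z (S t)) (y (S t)))) mu (fun k => proj1 (Hmu k)) Hs). }
  { intro k. unfold frechet_subgrad. exists (gval (S (mu k))). split; [apply HgZ|].
    intros eps He. exists (2 * gamma * eps). split; [apply Rmult_lt_0_compat; lra|].
    intros w [Hw1 Hw2]. destruct (g w) as [gw|] eqn:Hgw; [|exact I].
    pose proof (Hmin k w gw Hgw) as Hm.
    assert (E : c * nsq (vsub (vsub (vscal 2 (Yb k)) (Xp k)) w) - c * nsq (vsub (vsub (vscal 2 (Yb k)) (Xp k)) (Zb k)) = - inner (vs k) (vsub w (Zb k)) + c * nsq (vsub w (Zb k))).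
    { unfold c, vs. lin_eq. field. lra. }
    set (r := norm (vsub w (Zb k))) in *. assert (Hr : r^2 = nsq (vsub w (Zb k))) by apply norm_sq.
    assert (Hcr : c * r <= eps). { apply Rlt_le. replace eps with (c * (2*gamma*eps)) by (unfold c; field; lra). apply Rmult_lt_compat_l; lra. }
    assert (c * nsq (vsub w (Zb k)) <= eps * r) by (rewrite <- Hr; replace (c * r^2) with ((c*r)*r) by ring; apply Rmult_le_compat_r; lra).
    lra. }
Qed.

End Main.

Theorem theorem1 (n : nat) (f : vec n -> R) (df : vec n -> vec n)
  (g : vec n -> ereal) (sigma L gamma : R)
  (Hsigma : 0 < sigma) (HL : 0 < L)
  (Hdf : has_gradient f df) (Hsc : strongly_convex f sigma)
  (Hlip : lipschitz df L)
  (Hproper : proper g) (Hlsc : lsc g)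
  (Hgam : 0 < gamma < (3 * sigma - 2 * L) / L ^ 2)
  (Hprox : forall w : vec n, exists u, is_min (prox_obj g gamma w) u)
  (H3 : 3 * sigma > 2 * L)
  (y z x : nat -> vec n) (Hiter : pr_iteration f g gamma y z x) :
  (forall t, (1 <= t)%nat ->
     ele (merit f g gamma (y (S t)) (z (S t)) (x (S t)))
         (merit f g gamma (y t) (z t) (x t))) /\
  (forall ys zs xs : vec n, cluster_point3 y z x ys zs xs ->
     Un_cv (fun t => norm (vsub (x (S t)) (x t))) 0 /\
     Un_cv (fun t => 2 * norm (vsub (z (S t)) (y (S t)))) 0 /\
     zs = ys /\
     exists v, limiting_subgrad g zs v /\ vadd (df zs) v = vzero).
Proof.
  assert (Hg0 : 0 < gamma) by (destruct Hgam; lra).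
  assert (Hgam' : gamma * L^2 < 3 * sigma - 2 * L).
  { destruct Hgam as [_ H]. assert (HL2 : 0 < L^2) by nra.
    apply (Rmult_lt_compat_r (L^2)) in H; auto.
    replace ((3 * sigma - 2 * L) / L ^ 2 * L ^ 2) with (3*sigma - 2*L) in H by (field; lra). exact H. }
  assert (Hk : 0 < kappa sigma L gamma) by (unfold kappa; lra).
  split.
  - intros t Ht. destruct t as [|t]; [lia|].
    rewrite (merit_eq n f g gamma y z x Hiter (S t)), (merit_eq n f g gamma y z x Hiter t). simpl.
    pose proof (descent n f df g sigma L gamma Hsigma HL Hdf Hsc Hlip Hg0 y z x Hiter t).
    pose proof (nsq_nonneg (vsub (y (S (S t))) (y (S t)))).
    assert (0 <= kappa sigma L gamma / 2 * nsq (vsub (y (S (S t))) (y (S t)))) by (apply Rmult_le_pos; lra). lra.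
  - intros ys zs xs Hcl.
    pose proof (s_cv n f df g sigma L gamma Hsigma HL Hdf Hsc Hlip Hg0 Hgam' y z x Hiter ys zs xs Hlsc Hcl) as Hs.
    assert (H2 : Un_cv (fun t => 2 * norm (vsub (z (S t)) (y (S t)))) 0).
    { apply cv0_scal. exact (cv0_sqrt _ (fun t => nsq_nonneg _) Hs). }
    assert (H1 : Un_cv (fun t => norm (vsub (x (S t)) (x t))) 0).
    { replace (fun t => norm (vsub (x (S t)) (x t))) with (fun t => 2 * norm (vsub (z (S t)) (y (S t)))); [exact H2|].
      apply functional_extensionality. intro t. destruct (Hiter t) as [_ [_ Hx]]. rewrite Hx.
      replace (vsub (vadd (x t) (vscal 2 (vsub (z (S t)) (y (S t))))) (x t)) with (vscal 2 (vsub (z (S t)) (y (S t))))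
        by (apply functional_extensionality; intro i; unfold vsub, vadd, vscal; ring).
      rewrite norm_scal, Rabs_pos_eq; lra. }
    assert (Hzy : zs = ys).
    { apply functional_extensionality. intro i.
      assert (Hall : forall i, vsub zs ys i = 0).
      { apply nsq_eq0_of_small. intros eps He.
        destruct (Hs (eps/9)) as [T HT]; [lra|].
        destruct (Hcl (sqrt (eps/9)) (S T)) as [t' [Ht' [Hy [Hz _]]]]; [apply sqrt_lt_R0; lra|].
        destruct t' as [|m]; [lia|].
        specialize (HT m ltac:(lia)). unfold R_dist in HT. rewrite Rminus_0_r, Rabs_pos_eq in HT by apply nsq_nonneg.
        apply norm_lt in Hy. apply norm_lt in Hz. rewrite pow2_sqrt in Hy, Hz by lra.
        pose proof (nsq_3 zs ys (z (S m)) (y (S m))) as T3. rewrite (nsq_sym zs (z (S m))) in T3. lra. }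
      specialize (Hall i). unfold vsub in Hall. lra. }
    subst zs.
    split; [exact H1|]. split; [exact H2|]. split; [reflexivity|].
    exact (subgrad_part n f df g L gamma HL Hdf Hlip Hg0 y z x Hiter ys xs Hlsc Hproper Hcl Hs).
Qed.
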